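(* Let $\Lambda_2,\Lambda_3,\Lambda_4\in\mathbb C$ with $\Lambda_4\ne0$ and let $\mathcal V^{[2]}$, $v_\lambda$, $\xi$, $\widetilde{\mathbf L}_\mu$ and $\deg_\delta$ be as in the context. Define $M(v_\mu,v_\lambda)=\xi\big(\widetilde{\mathbf L}_\mu\mathbf L_{-\lambda}|J\rangle\big)$. Then for all partitions $\lambda,\mu$: $M(v_\mu,v_\lambda)=0$ whenever $\deg_1v_\mu>\deg_1v_\lambda$. If moreover $\Lambda_3=0$, then $M(v_\mu,v_\lambda)=0$ whenever $\deg_2v_\mu>\deg_2v_\lambda$.
   Context: $\mathcal V^{[2]}$ is the Virasoro Whittaker module generated by $|J\rangle$ with $L_n|J\rangle=\Lambda_n|J\rangle$ ($n=2,3,4$), $L_n|J\rangle=0$ ($n>4$). Basis $v_\lambda=\mathbf L_{-\lambda}|J\rangle$, $\mathbf L_{-\lambda}=L_{-\lambda_1+2}\cdots L_{-\lambda_\ell+2}$ for partitions $\lambda=(\lambda_1\ge\dots\ge\lambda_\ell\ge1)$, $v_\emptyset=|J\rangle$. $\xi$ is the linear functional giving the coefficient of $|J\rangle$ in this basis. Shifted generators: $\widetilde L_n=L_n-\Lambda_n$ for $n=3,4$ and $\widetilde L_n=L_n$ for $n>4$; $\widetilde{\mathbf L}_\mu=\widetilde L_{\mu_1+2}\cdots\widetilde L_{\mu_m+2}$ for $\mu=(\mu_1\ge\dots\ge\mu_m\ge1)$. For $\delta\in\{1,2\}$ and $\lambda=(\cdots3^{n_3}2^{n_2}1^{n_1})$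 (multiplicity notation), $\deg_\delta v_\lambda=n_1+\delta n_2+\sum_{k>2}n_k(k-2)$; equivalently $\deg_\delta L_{-k}=k$ ($k>0$), $\deg_\delta L_0=\delta$, $\deg_\delta L_1=1$. *)

(* Defs.v *)
From HB Require Import structures.
From mathcomp Require Import all_boot all_order all_algebra.
From mathcomp Require Import reals.
From mathcomp Require Import complex.
Set Implicit Arguments. Unset Strict Implicit. Unset Printing Implicit Defensive.
Import Order.TTheory GRing.Theory Num.Theory.
Local Open Scope ring_scope.

Definition is_partition (l : seq nat) : bool :=
  sorted geq l && all (fun k => 0 < k)%N l.

Section Vir.
Variables (F : fieldType) (V : lmodType F).

Definition is_vir_rep (c : F) (L : int -> V -> V) : Prop :=
  (forall n (a : F) (u v : V), L n (a *: u + v) = a *: L n u + L n v) /\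
  (forall (m n : int) (v : V),
     L m (L n v) - L n (L m v) =
       (m - n)%:~R *: L (m + n) v +
       (if m + n == 0 then (c / 12%:R * (m ^+ 3 - m)%:~R) *: v else 0)).

Definition is_whittaker2 (L : int -> V -> V) (La2 La3 La4 : F) (J : V) : Prop :=
  [/\ L 2 J = La2 *: J, L 3 J = La3 *: J, L 4 J = La4 *: J &
      forall n : int, 4 < n -> L n J = 0].

Definition vlam (L : int -> V -> V) (J : V) (la : seq nat) : V :=
  foldr (fun k v => L (2 - k%:Z) v) J la.

Definition is_partition_basis (b : seq nat -> V) : Prop :=
  (forall v : V, exists (s : seq (seq nat)) (a : seq nat -> F),
      all is_partition s /\ v = \sum_(p <- s) a p *: b p) /\
  (forall (s : seq (seq nat)) (a : seq nat -> F),
      uniq s -> all is_partition s ->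
      \sum_(p <- s) a p *: b p = 0 -> forall p, p \in s -> a p = 0).

Definition is_xi (b : seq nat -> V) (xi : V -> F) : Prop :=
  (forall (a : F) (u v : V), xi (a *: u + v) = a * xi u + xi v) /\
  (forall p, is_partition p -> xi (b p) = if p == [::] then 1 else 0).

Definition Ltilde (L : int -> V -> V) (La3 La4 : F) (n : int) (v : V) : V :=
  if n == 3 then L n v - La3 *: v
  else if n == 4 then L n v - La4 *: v
  else L n v.

Definition Ltilde_mu (L : int -> V -> V) (La3 La4 : F) (mu : seq nat) (v : V) : V :=
  foldr (fun k w => Ltilde L La3 La4 (k.+2)%:Z w) v mu.

End Vir.

Definition deg_part (delta k : nat) : nat :=
  if k == 1%N then 1%N else if k == 2%N then delta else (k - 2)%N.

Definition deg (delta : nat) (la : seq nat) : nat :=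
  sumn (map (deg_part delta) la).

(* Main.v *)
Require Import Defs.
From HB Require Import structures.
From mathcomp Require Import all_boot all_order all_algebra.
From mathcomp Require Import reals.
From mathcomp Require Import complex.
From mathcomp Require Import zify.
Import Order.TTheory GRing.Theory Num.Theory.
Local Open Scope ring_scope.

Lemma p_le (d x : nat) : (1 <= d <= 2)%N -> (deg_part d x <= x)%N.
Proof. move=> hd; rewrite /deg_part; repeat (case: ifP => /eqP ?); lia. Qed.

Lemma I1 (d n k : nat) : (1 <= d <= 2)%N -> (2 <= n <= k)%N ->
  (deg_part d (k - n) + deg_part d (n - 2) <= deg_part d k)%N.
Proof. move=> hd hn; rewrite /deg_part; repeat (case: ifP => /eqP ?); lia. Qed.

Lemma I2 (d n k : nat) : (1 <= d <= 2)%N -> (2 <= n)%N -> (k < n)%N ->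
  (deg_part d (n - 2) <= deg_part d k + deg_part d (n - k))%N.
Proof. move=> hd hn hk; rewrite /deg_part; repeat (case: ifP => /eqP ?); lia. Qed.

Lemma I3 (n : nat) : (2 <= n)%N -> (deg_part 1 (n - 2) <= deg_part 1 (n - 1))%N.
Proof. move=> hn; rewrite /deg_part; repeat (case: ifP => /eqP ?); lia. Qed.


Inductive G {F : fieldType} {V : lmodType F} (L : int -> V -> V) (J : V)
   (d : nat) : int -> V -> Prop :=
| G0 e : G L J d e 0
| Gw e s : Posz (deg d s) <= e -> G L J d e (vlam L J s)
| Glin e (a : F) u v : G L J d e u -> G L J d e v -> G L J d e (a *: u + v).

Section S.
Variables (F : fieldType) (V : lmodType F) (L : int -> V -> V) (J : V) (d : nat).

Lemma G_mono e e' v : G L J d e v -> e <= e' -> G L J d e' v.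
Proof.
elim=> [x|x s hs|x a u w _ hu _ hw] he.
- exact: G0.
- apply: Gw; lia.
- by apply: Glin; [apply: hu|apply: hw].
Qed.

Lemma G_neg e v : G L J d e v -> e < 0 -> v = 0.
Proof.
elim=> [x|x s hs|x a u w _ hu _ hw] he //.
- lia.
- by rewrite hu // hw // scaler0 addr0.
Qed.

Lemma G_scale e a v : G L J d e v -> G L J d e (a *: v).
Proof. by move=> h; rewrite -[a *: v]addr0; apply: Glin => //; apply: G0. Qed.

Lemma G_add e u v : G L J d e u -> G L J d e v -> G L J d e (u + v).
Proof. by move=> hu hv; rewrite -[u]scale1r; apply: Glin. Qed.

Lemma G_sub e u v : G L J d e u -> G L J d e v -> G L J d e (u - v).
Proof. by move=> hu hv; rewrite -scaleN1r addrC; apply: Glin. Qed.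

Variables (c La2 La3 La4 : F).
Hypothesis Hlin : forall n (a : F) (u v : V), L n (a *: u + v) = a *: L n u + L n v.
Hypothesis Hcomm : forall (m n : int) (v : V),
     L m (L n v) - L n (L m v) =
       (m - n)%:~R *: L (m + n) v +
       (if m + n == 0 then (c / 12%:R * (m ^+ 3 - m)%:~R) *: v else 0).
Hypothesis hw2 : L 2 J = La2 *: J.
Hypothesis hw3 : L 3 J = La3 *: J.
Hypothesis hw4 : L 4 J = La4 *: J.
Hypothesis hw5 : forall n : int, 4 < n -> L n J = 0.
Hypothesis hd : (1 <= d <= 2)%N.
Hypothesis H3 : d = 1%N \/ La3 = 0.

Lemma L0 n : L n 0 = 0.
Proof.
have := Hlin n 1 0 0; rewrite !scale1r addr0 => h.
have := congr1 (fun x => x - L n 0) h; rewrite subrr addrK => h2; by rewrite -h2.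
Qed.

Lemma LZ n a u : L n (a *: u) = a *: L n u.
Proof. by rewrite -[a *: u]addr0 Hlin L0 addr0. Qed.

Lemma LD n u v : L n (u + v) = L n u + L n v.
Proof. by have := Hlin n 1 u v; rewrite !scale1r. Qed.

Lemma LB n u v : L n (u - v) = L n u - L n v.
Proof. by rewrite LD -scaleN1r LZ scaleN1r. Qed.

Definition cst (n : int) : F := if n == 3 then La3 else if n == 4 then La4 else 0.

Lemma LtE n v : Ltilde L La3 La4 n v = L n v - cst n *: v.
Proof. by rewrite /Ltilde /cst; case: ifP => _ //; case: ifP => _ //; rewrite scale0r subr0. Qed.

Lemma LtE' n v : L n v = Ltilde L La3 La4 n v + cst n *: v.
Proof. by rewrite LtE subrK. Qed.

Lemma Lt0 n : Ltilde L La3 La4 n 0 = 0.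
Proof. by rewrite LtE L0 scaler0 subr0. Qed.

Lemma Lt_lin n a u v : Ltilde L La3 La4 n (a *: u + v) =
  a *: Ltilde L La3 La4 n u + Ltilde L La3 La4 n v.
Proof.
rewrite !LtE Hlin scalerDr scalerBr !scalerA mulrC.
rewrite opprD !addrA; congr (_ + _); rewrite addrAC //.
Qed.

Lemma G_create e k v : G L J d e v -> G L J d (e + Posz (deg_part d k)) (L (2 - Posz k) v).
Proof.
elim=> [x|x s hs|x a u w _ hu _ hw].
- rewrite L0; exact: G0.
- have -> : L (2 - Posz k) (vlam L J s) = vlam L J (k :: s) by [].
  apply: Gw; have -> : deg d (k :: s) = (deg_part d k + deg d s)%N by []. lia.
- by rewrite Hlin; apply: Glin.
Qed.

Lemma comm_t n m v : Ltilde L La3 La4 n (L m v) =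
  L m (Ltilde L La3 La4 n v) + (L n (L m v) - L m (L n v)).
Proof. by rewrite !LtE LB LZ [RHS]addrC addrA subrK. Qed.

Lemma key s : forall n : nat, (2 <= n)%N ->
  G L J d (Posz (deg d s) - Posz (deg_part d (n - 2))) (Ltilde L La3 La4 (Posz n) (vlam L J s)).
Proof.
elim: s => [|k w IH] n hn.
- rewrite /=.
  case: n hn => [|[|[|[|[|n]]]]] //= _.
  + rewrite /Ltilde /= hw2; apply: G_scale; apply: (@Gw _ _ _ _ _ _ [::]); by [].
  + rewrite /Ltilde /= hw3 subrr; exact: G0.
  + rewrite /Ltilde /= hw4 subrr; exact: G0.
  + rewrite /Ltilde /= hw5 //; exact: G0.
- have -> : vlam L J (k :: w) = L (2 - Posz k) (vlam L J w) by [].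
  have -> : deg d (k :: w) = (deg_part d k + deg d w)%N by [].
  set v := vlam L J w.
  have Gv : G L J d (Posz (deg d w)) v by apply: Gw.
  rewrite comm_t Hcomm.
  apply: G_add; last apply: G_add.
  + apply: G_mono; first exact: (G_create _ k _ (IH n hn)).
    lia.
  + apply: G_scale.
    case: (leqP n k) => hnk.
    * have -> : Posz n + (2 - Posz k) = 2 - Posz (k - n) by lia.
      apply: G_mono; first exact: (G_create _ (k - n) _ Gv).
      have hh : (2 <= n <= k)%N by rewrite hn.
      have := I1 d n k hd hh.
      lia.
    * have -> : Posz n + (2 - Posz k) = Posz (n + 2 - k) by lia.
      rewrite LtE'; apply: G_add.
      - have hm : (2 <= n + 2 - k)%N by lia.
        have h := IH _ hm.
        have e : (n + 2 - k - 2 = n - k)%N by lia.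
        rewrite e in h.
        apply: G_mono; first exact: h.
        have := I2 d n k hd hn hnk.
        lia.
      - rewrite /cst; case: ifP => [/eqP h3|_].
        + case: H3 => [ed|->]; last by rewrite scale0r; apply: G0.
          apply: G_scale; apply: G_mono; first exact: Gv.
          have ek : k = (n - 1)%N by lia.
          rewrite ek; subst d.
          have := I3 n hn.
          lia.
        case: ifP => [/eqP h4|_]; last by rewrite scale0r; apply: G0.
        apply: G_scale; apply: G_mono; first exact: Gv.
        have ek : k = (n - 2)%N by lia.
        rewrite ek; lia.
  + case: ifP => [/eqP h0|_]; last exact: G0.
    apply: G_scale; apply: G_mono; first exact: Gv.
    have hh : (2 <= n <= k)%N by rewrite hn; lia.
    have := I1 d n k hd hh.
    lia.
Qed.

Lemma G_tilde n e v : (2 <= n)%N -> G L J d e v ->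
  G L J d (e - Posz (deg_part d (n - 2))) (Ltilde L La3 La4 (Posz n) v).
Proof.
move=> hn; elim=> [x|x s hs|x a u w _ hu _ hw].
- rewrite Lt0; exact: G0.
- apply: G_mono; first exact: key.
  lia.
- by rewrite Lt_lin; apply: Glin.
Qed.

Lemma G_mu mu la : G L J d (Posz (deg d la) - Posz (deg d mu))
   (Ltilde_mu L La3 La4 mu (vlam L J la)).
Proof.
elim: mu => [|k mu IH].
- by apply: Gw; rewrite /= subr0.
- have -> : Ltilde_mu L La3 La4 (k :: mu) (vlam L J la) =
     Ltilde L La3 La4 (Posz k.+2) (Ltilde_mu L La3 La4 mu (vlam L J la)) by [].
  have := G_tilde k.+2 _ _ (isT : (2 <= k.+2)%N) IH.
  have -> : (k.+2 - 2 = k)%N by lia.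
  have -> : deg d (k :: mu) = (deg_part d k + deg d mu)%N by [].
  move=> h; apply: G_mono; first exact: h.
  lia.
Qed.

Lemma main la mu : (deg d la < deg d mu)%N ->
  Ltilde_mu L La3 La4 mu (vlam L J la) = 0.
Proof. move=> h; apply: G_neg (G_mu mu la) _; lia. Qed.

End S.

Theorem lemmaA3 (R : realType) (c La2 La3 La4 : R[i])
  (V : lmodType R[i]) (L : int -> V -> V) (J : V) (xi : V -> R[i]) :
  La4 != 0 ->
  is_vir_rep c L ->
  is_whittaker2 L La2 La3 La4 J ->
  is_partition_basis (vlam L J) ->
  is_xi (vlam L J) xi ->
  (forall la mu : seq nat, is_partition la -> is_partition mu ->
     (deg 1 la < deg 1 mu)%N ->
     xi (Ltilde_mu L La3 La4 mu (vlam L J la)) = 0) /\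
  (La3 = 0 ->
   forall la mu : seq nat, is_partition la -> is_partition mu ->
     (deg 2 la < deg 2 mu)%N ->
     xi (Ltilde_mu L La3 La4 mu (vlam L J la)) = 0).
Proof.
move=> _ [Hlin Hcomm] [hw2 hw3 hw4 hw5] _ [xlin _].
have xi0 : xi 0 = 0.
  have := xlin 1 0 0; rewrite scale1r addr0 mul1r => h.
  by have := congr1 (fun x => x - xi 0) h; rewrite subrr addrK => h2; rewrite -h2.
split.
- move=> la mu _ _ h.
  have e := (@main _ _ L J 1%N c La2 La3 La4 Hlin Hcomm hw2 hw3 hw4 hw5 isT (or_introl erefl) la mu h).
  by rewrite e.
- move=> h3 la mu _ _ h.
  have e := (@main _ _ L J 2%N c La2 La3 La4 Hlin Hcomm hw2 hw3 hw4 hw5 isT (or_intror h3) la mu h).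
  by rewrite e.
Qed.
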